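(* Let $\mathcal C$ be a concept hierarchy, $r_1,r_2,\epsilon\in[0,1]$ with $r_1\le r_2(1-\epsilon)$, $m$ a positive integer, and let $\mathcal A_2$ and $\mathcal H$ be the networks defined below (with $\mathcal H$ having a fixed failed set $F$ satisfying the stated constraint). Then $\mathcal H$ $implements_2$ $\mathcal A_2$: for every $B\subseteq C_0$, in the executions of $\mathcal A_2$ and $\mathcal H$ on input $B$, for every concept $c$, if $rep(c)$ does not fire at time $level(c)$ in $\mathcal A_2$, then no neuron in $reps(c)$ fires at time $level(c)$ in $\mathcal H$.
   Context: Concept hierarchies: fix positive integers $\ell_{max},n,k$. A universal set $D$ of concepts is partitioned into disjoint sets $D_0,\dots,D_{\ell_{max}}$ with $|D_0|=n$; $level(c)=\ell$ for $c\in D_\ell$. A concept hierarchy $\mathcal C$ consists of $C\subseteq D$, with $C_\ell=C\cap D_\ell$, and for each $c\in C_\ell$ with $1\le\ell\le\ell_{max}$ a set $children(c)\subseteq C_{\ell-1}$, such that $|C_{\ell_{max}}|=k$, $|children(c)|=k$ for all such $c$, and $children(c)\cap children(c')=\emptyset$ for distinct $c,c'\in C_\ell$. Common network dynamics: neurons partitioned into layers $N_0,\dots,N_{\ell_{max}}$; threshold $\tau$; weights $w(u,v)\in\{0,1\}$ for $u\in N_{\ell-1}$, $v\in N_\ell$. Failed neurons never fire. A non-failed neuron $v\in N_\ell$, $\ell\ge1$, does not fire at time 0 and fires at time $t\ge1$ iff $\sum_{u\in N_{\ell-1}}w(u,v)x_u(t-1)\ge\tau$, where $x_u(s)\in\{0,1\}$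 indicates whether $u$ fires at time $s$. $\mathcal A_2$: no failures; each $c\in D_0$ has $rep(c)\in N_0$, each $c\in C$ with $level(c)\ge1$ has $rep(c)\in N_{level(c)}$, all distinct; $w(u,v)=1$ iff $v=rep(c)$, $u=rep(c')$ for a child $c'$ of $c$, else $0$; $\tau=r_1k$. Input $B\subseteq C_0$: the layer-0 neurons $rep(b)$, $b\in B$, fire at time 0, no other layer-0 neuron fires at time 0, and no layer-0 neuron fires at any other time. $\mathcal H$: each $c\in D_0$ has a set $reps(c)$ of $m$ neurons in $N_0$, each $c\in C$ with $level(c)\ge1$ a set $reps(c)$ of $m$ neurons in $N_{level(c)}$, all pairwise disjoint; $w(u,v)=1$ iff $v\in reps(c)$ and $u\in reps(c')$ for a child $c'$ of $c$, else $0$; $\tau=r_2km(1-\epsilon)$. A fixed set $F$ of neurons is failed, such that for every concept $c$ at least $m(1-\epsilon)$ neurons of $reps(c)$ are not in $F$. Input $B\subseteq C_0$: a layer-0 neuron fires at time 0 iff it is in $\bigcup_{b\in B}reps(b)\setminus F$, and no layer-0 neuron fires at any other time. *)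

(* Defs.v *)
From mathcomp Require Import all_boot all_order all_algebra.
Set Implicit Arguments. Unset Strict Implicit. Unset Printing Implicit Defensive.
Import Order.TTheory GRing.Theory Num.Theory.
Local Open Scope ring_scope.

(* The universal set D of concepts is a finType; level c = l means      *)
(* c \in D_l.  C is the set of concepts of the hierarchy, children c    *)
(* its children (only meaningful for c \in C with level c >= 1).        *)
Definition concept_hierarchy (D : finType) (lmax n k : nat)
    (level : D -> nat) (C : {set D}) (children : D -> {set D}) : Prop :=
  [/\ (forall c, (level c <= lmax)%N),
      #|[set c : D | level c == 0%N]| = n,
      #|[set c in C | level c == lmax]| = k,
      (forall c, c \in C -> (1 <= level c)%N ->
         children c \subset [set c' in C | level c' == (level c).-1]
         /\ #|children c| = k) &
      (forall c c', c \in C -> c' \in C -> level c = level c' ->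
         (1 <= level c)%N -> c != c' -> [disjoint children c & children c'])].

Definition has_rep (D : finType) (level : D -> nat) (C : {set D}) (c : D) : bool :=
  (level c == 0%N) || (c \in C).

(* Neurons form a finType N, layer v = l means v \in N_l, weights are   *)
(* boolean (0/1), tau is the threshold, failed the set of failed        *)
(* neurons, input the set of layer-0 neurons firing at time 0.          *)
(* fires ... t v  ==  x_v(t).                                           *)
Fixpoint fires (R : numDomainType) (N : finType) (layer : N -> nat)
    (w : N -> N -> bool) (tau : R) (failed : pred N) (input : pred N)
    (t : nat) (v : N) {struct t} : bool :=
  match t with
  | 0 => [&& layer v == 0%N, ~~ failed v & input v]
  | t'.+1 =>
      [&& layer v != 0%N, ~~ failed v &
        tau <= (\sum_(u : N | (layer u).+1 == layer v)
                  (w u v && fires layer w tau failed input t' u : nat))%:R]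
  end.

(* Main.v *)
Require Import Defs.
From mathcomp Require Import all_boot all_order all_algebra.
Import Order.TTheory GRing.Theory Num.Theory.
Local Open Scope ring_scope.

From mathcomp Require Import ring lra.

Lemma sum_bool_card (T:finType) (P b : pred T) :
  (\sum_(u | P u) (b u : nat) = #|[set u | P u && b u]|)%N.
Proof.
rewrite -sum1_card big_mkcond [RHS]big_mkcond /=; apply: eq_bigr => i _.
by rewrite inE; case: (P i); case: (b i).
Qed.

Lemma card_bigcup_le (I T : finType) (S : {set I}) (A : I -> {set T}) :
  (#|\bigcup_(i in S) A i| <= \sum_(i in S) #|A i|)%N.
Proof.
elim/big_rec2: _ => [|i y s _ Hle]; first by rewrite cards0.
rewrite cardsU; apply: leq_trans (leq_subr _ _) _; by rewrite leq_add2l.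
Qed.

Theorem theorem7p3
  (R : realFieldType)
  (* the concept hierarchy *)
  (lmax n k : nat) (hlmax : (0 < lmax)%N) (hn : (0 < n)%N) (hk : (0 < k)%N)
  (D : finType) (level : D -> nat) (C : {set D}) (children : D -> {set D})
  (hC : concept_hierarchy lmax n k level C children)
  (* parameters *)
  (r1 r2 eps : R)
  (hr1 : 0 <= r1 <= 1) (hr2 : 0 <= r2 <= 1) (heps : 0 <= eps <= 1)
  (hr12 : r1 <= r2 * (1 - eps))
  (m : nat) (hm : (0 < m)%N)
  (* the network A_2 *)
  (N1 : finType) (layer1 : N1 -> nat) (w1 : N1 -> N1 -> bool) (rep : D -> N1)
  (hlayer1 : forall v, (layer1 v <= lmax)%N)
  (hrep_layer : forall c, has_rep level C c -> layer1 (rep c) = level c)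
  (hrep_inj : forall c c', has_rep level C c -> has_rep level C c' ->
       rep c = rep c' -> c = c')
  (hw1 : forall u v, (layer1 u).+1 = layer1 v ->
       w1 u v = [exists c, exists c',
                   [&& c \in C, (1 <= level c)%N, c' \in children c,
                       v == rep c & u == rep c']])
  (* the network H *)
  (N2 : finType) (layer2 : N2 -> nat) (w2 : N2 -> N2 -> bool)
  (reps : D -> {set N2}) (F : {set N2})
  (hlayer2 : forall v, (layer2 v <= lmax)%N)
  (hreps_card : forall c, has_rep level C c -> #|reps c| = m)
  (hreps_layer : forall c, has_rep level C c ->
       forall v, v \in reps c -> layer2 v = level c)
  (hreps_disj : forall c c', has_rep level C c -> has_rep level C c' ->
       c != c' -> [disjoint reps c & reps c'])
  (hw2 : forall u v, (layer2 u).+1 = layer2 v ->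
       w2 u v = [exists c, exists c',
                   [&& c \in C, (1 <= level c)%N, c' \in children c,
                       v \in reps c & u \in reps c']])
  (hF : forall c, has_rep level C c ->
       m%:R * (1 - eps) <= #|reps c :\: F|%:R) :
  forall B : {set D}, B \subset [set c in C | level c == 0%N] ->
  forall c, has_rep level C c ->
    ~~ fires layer1 w1 (r1 * k%:R) pred0
         (fun u => [exists b in B, u == rep b]) (level c) (rep c) ->
    forall v, v \in reps c ->
      ~~ fires layer2 w2 (r2 * k%:R * m%:R * (1 - eps)) (mem F)
           (fun u => u \in (\bigcup_(b in B) reps b) :\: F) (level c) v.
Proof.
move=> B hB.
have [_ _ _ hch _] := hC.
have key : forall l c, has_rep level C c -> level c = l -> forall v, v \in reps c ->
  fires layer2 w2 (r2 * k%:R * m%:R * (1 - eps)) (mem F)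
           (fun u => u \in (\bigcup_(b in B) reps b) :\: F) l v ->
  fires layer1 w1 (r1 * k%:R) pred0
         (fun u => [exists b in B, u == rep b]) l (rep c).
  elim=> [|l IH] c hc hl v hv.
    rewrite /= => /and3P[_ _]; rewrite !inE => /andP[_ /bigcupP[b hbB hvb]].
    have hbr : has_rep level C b.
      move: (subsetP hB b hbB); rewrite inE => /andP[hb _].
      by rewrite /has_rep hb orbT.
    have eb : b = c.
      apply/eqP; apply: contraT => ne.
      by have := disjointFr (hreps_disj _ _ hbr hc ne) hvb; rewrite hv.
    rewrite /= hrep_layer // hl eqxx /=; apply/existsP; exists b.
    by rewrite hbB eb eqxx.
  rewrite /= => /and3P[hl2 hF2 hsum].
  have cC : c \in C by move: hc; rewrite /has_rep hl.
  have [hsub hcard] : children c \subset [set c0 in C | level c0 == (level c).-1] /\ #|children c| = k by apply: hch cC _; rewrite hl.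
  have chr : forall c', c' \in children c -> has_rep level C c' /\ level c' = l.
    move=> c' hc'; move: (subsetP hsub c' hc'); rewrite inE hl /= => /andP[h1 /eqP h2].
    by rewrite /has_rep h1 orbT.
  set S := [set c' in children c | fires layer1 w1 (r1 * k%:R) pred0
         (fun u => [exists b in B, u == rep b]) l (rep c')].
  have hX2 : (\sum_(u : N2 | (layer2 u).+1 == layer2 v)
         (w2 u v && fires layer2 w2 (r2 * k%:R * m%:R * (1 - eps)) (mem F)
           (fun u => u \in (\bigcup_(b in B) reps b) :\: F) l u : nat) <= m * #|S|)%N.
    rewrite sum_bool_card.
    have -> : (m * #|S| = \sum_(i in S) #|reps i|)%N.
      rewrite mulnC -sum_nat_const; apply: eq_bigr => i; rewrite inE => /andP[hi _].
      by rewrite hreps_card //; case: (chr i hi).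
    apply: leq_trans; last exact: card_bigcup_le. apply: subset_leq_card.
    apply/subsetP => u; rewrite inE => /and3P[/eqP hlu hw hfu].
    rewrite hw2 // in hw.
    case/existsP: hw => c1 /existsP[c' /and5P[c1C _ hc' hvc1 huc']].
    have hc1r : has_rep level C c1 by rewrite /has_rep c1C orbT.
    have ec : c1 = c.
      apply/eqP; apply: contraT => ne.
      by have := disjointFr (hreps_disj _ _ hc1r hc ne) hvc1; rewrite hv.
    subst c1.
    have [hr' hl'] := chr c' hc'.
    apply/bigcupP; exists c' => //; rewrite inE hc' /=.
    exact: (IH c' hr' hl' u huc' hfu).
  have hX1 : (#|S| <= \sum_(u : N1 | (layer1 u).+1 == level c)
         (w1 u (rep c) && fires layer1 w1 (r1 * k%:R) pred0
         (fun u => [exists b in B, u == rep b]) l u : nat))%N.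
    rewrite sum_bool_card -(card_in_imset (f:=rep) (D:=S)); last first.
      move=> x y; rewrite !inE => /andP[hx _] /andP[hy _].
      apply: hrep_inj; [exact: (chr x hx).1 | exact: (chr y hy).1].
    apply: subset_leq_card; apply/subsetP => u /imsetP[c' hc' ->].
    rewrite inE in hc'; case/andP: hc' => hc' hf; have [hr' hl'] := chr c' hc'.
    rewrite inE hf andbT hrep_layer // hl' hl eqxx /=.
    rewrite hw1; last by rewrite !hrep_layer // hl' hl.
    by apply/existsP; exists c; apply/existsP; exists c'; rewrite cC hl hc' !eqxx.
  rewrite /= hrep_layer // hl /=.
  move: hX1 hX2; rewrite -(ler_nat R) -(ler_nat R) => hX1 hX2.
  rewrite hl in hX1; apply: (le_trans _ hX1).
  have h2 := le_trans hsum hX2.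
  rewrite natrM in h2.
  have hm0 : (0 < m%:R :> R) by rewrite ltr0n.
  have hk0 : (0 <= k%:R :> R) by rewrite ler0n.
  have hS0 : (0 <= #|S|%:R :> R) by rewrite ler0n.
  rewrite -(ler_pM2l hm0).
  have hmk : (0 <= m%:R * k%:R :> R) by apply: mulr_ge0 => //; apply: ltW.
  have := ler_wpM2r hmk hr12.
  move=> h3.
  have e1 : m%:R * (r1 * k%:R) = r1 * (m%:R * k%:R) :> R by ring.
  have e2 : r2 * k%:R * m%:R * (1 - eps) = r2 * (1 - eps) * (m%:R * k%:R) :> R by ring.
  rewrite e1; rewrite e2 in h2; exact: le_trans h3 h2.
move=> c hc hnf v hv; apply: contra hnf; exact: key.
Qed.
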